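(* Let $F$ be a positive integer and let $\mathrm{G}(F)$ be the graph whose vertex set is $\mathrm{Sat}(F)$ and in which $(S,T)\in\mathrm{Sat}(F)\times\mathrm{Sat}(F)$ is an edge if and only if $T=S\setminus\{\mathrm{m}(S)\}$. Then $\mathrm{G}(F)$ is a tree with root $\Delta(F+1)$, i.e. for every vertex $S\neq\Delta(F+1)$ there is a unique path in $\mathrm{G}(F)$ connecting $S$ to $\Delta(F+1)$.
   Context: A numerical semigroup is a subset $S\subseteq\mathbb{N}$ closed under addition, containing $0$, with $\mathbb{N}\setminus S$ finite. Its Frobenius number $\mathrm{F}(S)$ is the largest integer not in $S$, and its multiplicity $\mathrm{m}(S)$ is $\min(S\setminus\{0\})$. For $A\subseteq\mathbb{N}$ and $a\in A$, let $\mathrm{d}_A(a)=\gcd\{x\in A\mid x\le a\}$. A numerical semigroup $S$ is saturated if $s+\mathrm{d}_S(s)\in S$ for all $s\in S\setminus\{0\}$. For a positive integer $F$, $\mathrm{Sat}(F)$ denotes the set of all saturated numerical semigroups $S$ with $\mathrm{F}(S)=F$. For $m\in\mathbb{N}$, $\Delta(m)=\{0\}\cup\{x\in\mathbb{N}\mid x\ge m\}$. A path of length $n$ from $x$ to $y$ in a graph is a sequence of distinct edges $(v_0,v_1),(v_1,v_2),\dots,(v_{n-1},v_n)$ with $v_0=x$, $v_n=y$. *)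

(* Defs.v *)
(* Subsets of N are represented as boolean predicates nat -> bool;
   equality of subsets is Leibniz equality of functions. *)
From mathcomp Require Import all_boot.
Set Implicit Arguments. Unset Strict Implicit. Unset Printing Implicit Defensive.

Definition nset := nat -> bool.

Definition numerical_semigroup (S : nset) : Prop :=
  [/\ S 0, (forall x y, S x -> S y -> S (x + y)) & exists N, forall x, N <= x -> S x].

Definition is_frobenius (S : nset) (F : nat) : Prop :=
  ~~ S F /\ (forall x, F < x -> S x).

Definition is_multiplicity (S : nset) (m : nat) : Prop :=
  [/\ S m, 0 < m & forall x, S x -> 0 < x -> m <= x].

Definition dA (A : nset) (a : nat) : nat := \big[gcdn/0]_(0 <= x < a.+1 | A x) x.

Definition saturated (S : nset) : Prop :=
  forall s, S s -> s != 0 -> S (s + dA S s).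

Definition Sat (F : nat) (S : nset) : Prop :=
  [/\ numerical_semigroup S, saturated S & is_frobenius S F].

Definition Delta (m : nat) : nset := fun x => (x == 0) || (m <= x).

Definition remove (S : nset) (a : nat) : nset := fun x => S x && (x != a).

Definition GF_edge (F : nat) (S T : nset) : Prop :=
  Sat F S /\ Sat F T /\ exists m, is_multiplicity S m /\ T = remove S m.

(* A path from x to y: the vertex list x :: p (v_0 = x, ..., v_n = last x p = y),
   consecutive vertices form edges of G(F), and the edges are pairwise distinct. *)
Definition is_GF_path (F : nat) (x y : nset) (p : seq nset) : Prop :=
  let v := fun i => nth x (x :: p) i in
  [/\ last x p = y,
      (forall i, i < size p -> GF_edge F (v i) (v i.+1)) &
      (forall i j, i < j -> j < size p -> (v i, v i.+1) <> (v j, v j.+1))].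

(* Main.v *)
Require Import Defs.
From mathcomp Require Import all_boot.
From mathcomp Require Import zify.
From Stdlib Require Import FunctionalExtensionality Classical.

Lemma dvd_dA (A : nset) a x : x <= a -> A x -> dA A a %| x.
Proof.
move=> hx Ax; rewrite /dA (big_rem x) /=; last by rewrite mem_index_iota; lia.
by rewrite Ax dvdn_gcdl.
Qed.

Lemma dA_dvd (A : nset) a d : (forall x, x <= a -> A x -> d %| x) -> d %| dA A a.
Proof.
move=> h; rewrite /dA big_seq_cond; apply: (big_ind (fun g => d %| g)) => //.
  by move=> u v hu hv; rewrite dvdn_gcd hu hv.
move=> i /andP[]; rewrite mem_index_iota => hi Ai; apply: h => //; lia.
Qed.

Lemma dA_gt0 (A : nset) s : A s -> 0 < s -> 0 < dA A s.
Proof.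
move=> As s0; have := @dvd_dA A s s (leqnn s) As.
case: (dA A s) => // ; rewrite dvd0n; lia.
Qed.

Lemma sat_mult S : saturated S -> forall z s, S s -> s != 0 -> dA S s %| z -> S (s + z).
Proof.
move=> hS z; elim: z {-2}z (leqnn z) => [|n IH] z hz s Ss s0 hd.
  have -> : z = 0 by lia.
  by rewrite addn0.
case: (posnP z) => [->|z0]; first by rewrite addn0.
have g0 : 0 < dA S s by apply: dA_gt0 => //; lia.
have gz : dA S s <= z by apply: dvdn_leq.
have Ss' := hS s Ss s0.
have h' : dA S (s + dA S s) %| dA S s.
  apply: dA_dvd => x hx Sx; apply: dvd_dA => //; lia.
have := IH (z - dA S s) ltac:(lia) (s + dA S s) Ss' ltac:(lia).
have -> : s + dA S s + (z - dA S s) = s + z by lia.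
apply; apply: dvdn_trans h' _; by rewrite dvdn_sub.
Qed.

Section Main.
Variable F : nat.
Hypothesis HF : 0 < F.
Notation D := (Delta F.+1).

Lemma sat_D : Sat F D.
Proof.
split.
- split; first by [].
  + move=> x y; rewrite /Delta /= => /orP[/eqP->|hx] /orP[/eqP->|hy] /=; lia.

  + exists F.+1 => x hx; rewrite /Delta /=; apply/orP; right; lia.
- move=> s; rewrite /Delta /= => /orP[/eqP->//|hs] _; apply/orP; right; lia.
- split; rewrite /Delta /=; first by apply/negP => /orP[/eqP|]; lia.
  move=> x hx; apply/orP; right; lia.
Qed.

Lemma mult_ex S : Sat F S -> exists m, is_multiplicity S m.
Proof.
move=> [_ _ [_ hF]].
have ex : exists x, S x && (0 < x) by exists F.+1; rewrite hF //.
case: (ex_minnP ex) => m /andP[Sm m0] hm; exists m; split => //.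
by move=> x Sx x0; apply: hm; rewrite Sx x0.
Qed.

Lemma mult_uniq S m1 m2 : is_multiplicity S m1 -> is_multiplicity S m2 -> m1 = m2.
Proof.
move=> [a b c] [d e f]; have := c _ d e; have := f _ a b; lia.
Qed.

Lemma mult_le S m : Sat F S -> is_multiplicity S m -> S <> D -> m <= F.
Proof.
move=> [[S0 _ _] _ [nSF hF]] [Sm m0 hm] nD.
case: (leqP m F) => // hmF; exfalso; apply: nD.
apply: functional_extensionality => x; rewrite /Delta.
case: (posnP x) => [->|x0]; first by rewrite S0.
case: (leqP x F) => hx /=.
  by apply/negP => Sx; have := hm _ Sx x0; lia.
by rewrite hF.
Qed.

Lemma remove_sat S m : Sat F S -> is_multiplicity S m -> S <> D -> Sat F (remove S m).
Proof.
move=> hS hm nD; have hmF := @mult_le S m hS hm nD.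
case: hS => [[S0 Sadd [N hN]] sat [nSF hF]]; case: hm => [Sm m0 hmin].
have mF : m != F by apply/eqP => e; rewrite -e Sm in nSF.
rewrite /remove; split.
- split.
  + by rewrite S0 /=; lia.
  + move=> x y /andP[Sx xm] /andP[Sy ym]; rewrite Sadd //=.
    case: (posnP x) => [->|x0] //; case: (posnP y) => [->|y0]; first by rewrite addn0.
    have := hmin _ Sx x0; have := hmin _ Sy y0; lia.
  + exists (N + m.+1) => x hx; rewrite hN /=; lia.
- move=> s /andP[Ss sm] s0; apply/andP; split.
    apply: sat_mult => //; apply: dA_dvd => x hx Sx; apply: dvd_dA => //.
    by move: Sx => /andP[].
  have := hmin _ Ss ltac:(lia); lia.
- split; first by rewrite negb_and nSF.
  move=> x hx; rewrite hF //=; lia.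
Qed.

Lemma no_edge_D T : ~ GF_edge F D T.
Proof.
move=> [_ [[_ _ [_ hF]] [m [[Dm m0 _] eT]]]]; subst T.
have : F < m by move: Dm; rewrite /Delta /= => /orP[/eqP|]; lia.
move=> hm; have := hF m hm; rewrite /remove eqxx andbF //.
Qed.

Arguments no_edge_D {T}.

Lemma edge_fun x z w : GF_edge F x z -> GF_edge F x w -> z = w.
Proof.
move=> [_ [_ [m1 [h1 ->]]]] [_ [_ [m2 [h2 ->]]]].
by rewrite (@mult_uniq x m1 m2 h1 h2).
Qed.

Arguments edge_fun {x z w}.

Lemma path_nil x y : is_GF_path F x y [::] -> x = y.
Proof. by case. Qed.

Lemma shift (x z : nset) s k : k < size s -> nth x (x :: s) k.+1 = nth z s k.
Proof. by move=> hk; rewrite /= (set_nth_default z x). Qed.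

Lemma path_cons x y z p : is_GF_path F x y (z :: p) ->
  GF_edge F x z /\ is_GF_path F z y p.
Proof.
move=> [hl he hd]; split; first by apply: (he 0).
split => //.
- move=> i hi; have := he i.+1 hi.
  by rewrite (@shift x z (z::p) i ltac:(simpl; lia)) (@shift x z (z::p) i.+1 ltac:(simpl; lia)).
- move=> i j hij hj; have := hd i.+1 j.+1 hij hj.
  rewrite (@shift x z (z::p) i ltac:(simpl; lia)).
  rewrite (@shift x z (z::p) i.+1 ltac:(simpl; lia)).
  rewrite (@shift x z (z::p) j ltac:(simpl; lia)).
  by rewrite (@shift x z (z::p) j.+1 ltac:(simpl; lia)).
Qed.

Lemma path_uniq p : forall S q, is_GF_path F S D p -> is_GF_path F S D q -> p = q.
Proof.
elim: p => [|z p IH] S [|w q] //.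
- move=> /path_nil -> /path_cons [e _]; by case: (no_edge_D e).
- move=> /path_cons [e _] /path_nil e'; rewrite e' in e; by case: (no_edge_D e).
- move=> /path_cons [e1 h1] /path_cons [e2 h2].
  have ezw := edge_fun e1 e2; subst w; by rewrite (IH _ _ h1 h2).
Qed.

Definition sub (A B : nset) := forall x, A x -> B x.

Lemma path_ex n : forall S m, Sat F S -> is_multiplicity S m -> F.+1 - m < n ->
  exists p, is_GF_path F S D p /\ (forall k, k <= size p -> sub (nth S (S :: p) k) S).
Proof.
elim: n => [|n IH] S m hS hm hn; first by lia.
case: (classic (S = D)) => hSD.
  exists [::]; split; last by case=> [|k] //= _ x.
  by split => //= i.
have hT := @remove_sat S m hS hm hSD; have hmF := @mult_le S m hS hm hSD.
case: (@mult_ex _ hT) => m' hm'.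
have mm' : m < m'.
  case: hm' => [/andP[Sm' m'm] m'0 _]; case: hm => [_ _ hmin].
  have := hmin _ Sm' m'0; lia.
have m'F : m' <= F.+1.
  case: hm' => [_ _ hmin]; case: hT => [_ _ [_ hF]]; apply: hmin; [by apply: hF|lia].
have [p [hp hsub]] := IH _ _ hT hm' ltac:(lia).
have subT : sub (remove S m) S by move=> x /andP[].
have vsub : forall k, k <= size p -> sub (nth (remove S m) (remove S m :: p) k) (remove S m).
  by move=> k hk; apply: hsub.
have Sm : S m by case: hm.
have nT : forall k, k <= size p -> nth (remove S m) (remove S m :: p) k <> S.
  move=> k hk e; have := vsub k hk m; rewrite e => /(_ Sm).
  by rewrite /remove eqxx andbF.
case: hp => [hl he hd].
exists (remove S m :: p); split.
- split => //.
  + case=> [|i] hi; first by split=> //; split => //; exists m.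
    rewrite (@shift S (remove S m) (remove S m :: p) i ltac:(simpl in *; lia)).
    rewrite (@shift S (remove S m) (remove S m :: p) i.+1 ltac:(simpl in *; lia)).
    by apply: he; simpl in *; lia.
  + case=> [|i] [|j] // hij hj.
      rewrite (@shift S (remove S m) (remove S m :: p) j ltac:(simpl in *; lia)).
      rewrite (@shift S (remove S m) (remove S m :: p) j.+1 ltac:(simpl in *; lia)) /=.
      move=> [] e _; apply: (nT j); [simpl in *; lia|by rewrite -e].
    rewrite (@shift S (remove S m) (remove S m :: p) i ltac:(simpl in *; lia)).
    rewrite (@shift S (remove S m) (remove S m :: p) i.+1 ltac:(simpl in *; lia)).
    rewrite (@shift S (remove S m) (remove S m :: p) j ltac:(simpl in *; lia)).
    rewrite (@shift S (remove S m) (remove S m :: p) j.+1 ltac:(simpl in *; lia)).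
    by apply: hd; simpl in *; lia.
- case=> [|k] hk; first by move=> x.
  rewrite (@shift S (remove S m) (remove S m :: p) k ltac:(simpl in *; lia)).
  by move=> x /(vsub k ltac:(simpl in *; lia)) /subT.
Qed.

End Main.

Theorem proposition17 (F : nat) (HF : 0 < F) :
  Sat F (Delta F.+1) /\
  (forall S : nset, Sat F S -> S <> Delta F.+1 ->
     exists! p : seq nset, is_GF_path F S (Delta F.+1) p).
Proof.
split; first exact: sat_D HF.
move=> S hS _.
have [m hm] := @mult_ex F S hS.
have [p [hp _]] := @path_ex F HF (F.+1 - m).+1 S m hS hm (ltnSn _).
exists p; split => // q hq; exact: (@path_uniq F HF p S q hp hq).
Qed.
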